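(* Let $y_0\in\mathbb{R}$, $b>0$, $\epsilon>0$, and let $f:[y_0,\infty)\to\mathbb{R}$ be such that $p:=1/f$ is well defined and twice differentiable on $[y_0,\infty)$, with $f(y_0)>0$, $f'(y)>0$ and $p''(y)>0$ for all $y\ge y_0$. Assume $b<\int_{y_0}^{\infty}p(y)\,dy$ (possibly $+\infty$). For $h>0$ and integers $N\ge0$ define $$\Sigma_{l,h,N}=\sum_{i=1}^{N}h\,p(y_0+hi),\qquad \Sigma_{t,h,N}=\sum_{i=1}^{N}\frac h2\big(p(y_0+hi)+p(y_0+h(i-1))\big).$$ For each positive integer $j$ let $h^{(j)}=\epsilon/j$, let $n_2^{(j)}$ be the smallest positive integer $N$ with $\Sigma_{l,h^{(j)},N}\ge b$ (assume $n_2^{(1)}$ exists), and let $n_3^{(j)}$ be the largest integer $N\ge0$ with $\Sigma_{t,h^{(j)},N}\le b$. Then for every positive integer $j$, $$n_2^{(j)}>n_3^{(j)}\qquad\text{and}\qquad h^{(j)}\,n_3^{(j)}\ge h^{(1)}\,n_3^{(1)}.$$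
   Context: $\Sigma_{l,h,N}$ and $\Sigma_{t,h,N}$ are the lower rectangular and trapezoidal sums with step $h$ for $\int_{y_0}^{y_0+hN}p(y)\,dy$; empty sums are $0$. *)

(* Defs.v *)
From Stdlib Require Import Reals.
From Coquelicot Require Import Coquelicot.
Open Scope R_scope.

Definition has_deriv_ge (y0 : R) (g : R -> R) (y l : R) : Prop :=
  filterlim (fun x => (g x - g y) / (x - y))
    (within (fun x => y0 <= x /\ x <> y) (locally y)) (locally l).

Fixpoint sigma_l (p : R -> R) (y0 h : R) (N : nat) : R :=
  match N with
  | O => 0
  | S n => sigma_l p y0 h n + h * p (y0 + h * INR (S n))
  end.

Fixpoint sigma_t (p : R -> R) (y0 h : R) (N : nat) : R :=
  match N with
  | O => 0
  | S n => sigma_t p y0 h n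
           + h / 2 * (p (y0 + h * INR (S n)) + p (y0 + h * INR n))
  end.

Definition is_first_l (p : R -> R) (y0 h b : R) (N : nat) : Prop :=
  (0 < N)%nat /\ b <= sigma_l p y0 h N /\
  forall M : nat, (0 < M)%nat -> b <= sigma_l p y0 h M -> (N <= M)%nat.

Definition is_last_t (p : R -> R) (y0 h b : R) (N : nat) : Prop :=
  sigma_t p y0 h N <= b /\
  forall M : nat, sigma_t p y0 h M <= b -> (M <= N)%nat.

(* Main.v *)
Require Import Defs.
From Stdlib Require Import Reals Lra Lia Classical Arith.
From Coquelicot Require Import Coquelicot.
Open Scope R_scope.


Lemma deriv_eps y0 g y l : has_deriv_ge y0 g y l ->
  forall e, 0 < e -> exists d, 0 < d /\ forall x, y0 <= x -> x <> y -> Rabs (x - y) < d ->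
   Rabs ((g x - g y)/(x-y) - l) < e.
Proof.
  intros H e He.
  destruct (proj1 (filterlim_locally _ _) H (mkposreal e He)) as [d Hd].
  exists d; split; [apply cond_pos|].
  intros x Hx Hxy Hd'. apply (Hd x). exact Hd'. split; auto.
Qed.

Definition ext (y0 : R) (g : R -> R) x := g (Rmax y0 x).

Lemma ext_deriv y0 g y l : y0 < y -> has_deriv_ge y0 g y l -> derivable_pt_lim (ext y0 g) y l.
Proof.
  intros Hy H e He.
  destruct (deriv_eps _ _ _ _ H e He) as [d [Hd Hd2]].
  assert (Hm : 0 < Rmin d (y - y0)) by (apply Rmin_pos; lra).
  exists (mkposreal _ Hm). intros h Hh Hh2. simpl in Hh2.
  unfold ext. rewrite (Rmax_right y0 (y+h)), (Rmax_right y0 y) by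
   (try lra; pose proof (Rmin_r d (y-y0)); pose proof (Rabs_def2 _ _ (Rlt_le_trans _ _ _ Hh2 (Rmin_r d (y-y0)))); lra).
  pose proof (Rmin_r d (y-y0)); pose proof (Rmin_l d (y-y0)).
  pose proof (Rabs_def2 _ _ Hh2).
  specialize (Hd2 (y+h)). replace (y + h - y) with h in Hd2 by ring.
  apply Hd2; lra.
Qed.

Lemma ext_cont0 y0 g l : has_deriv_ge y0 g y0 l -> continuity_pt (ext y0 g) y0.
Proof.
  intros H e He.
  destruct (deriv_eps _ _ _ _ H 1 Rlt_0_1) as [d [Hd Hd2]].
  assert (Ha: 0 < Rabs l + 1) by (pose proof (Rabs_pos l); lra).
  exists (Rmin d (e / (Rabs l + 1))). split. apply Rmin_pos; auto. apply Rdiv_lt_0_compat; lra.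
  intros x [[_ Hx] Hx2]. unfold dist in Hx2; simpl in Hx2; unfold R_dist in *.
  unfold ext. rewrite (Rmax_left y0 y0) by lra.
  destruct (Rle_lt_dec x y0) as [Hle|Hlt].
  - rewrite Rmax_left by lra. simpl; unfold R_dist. replace (g y0 - g y0) with 0 by ring. rewrite Rabs_R0. exact He.
  - rewrite Rmax_right by lra. simpl; unfold R_dist.
    pose proof (Rmin_l d (e / (Rabs l + 1))); pose proof (Rmin_r d (e / (Rabs l + 1))).
    specialize (Hd2 x ltac:(lra) ltac:(lra) ltac:(lra)).
    set (q := (g x - g y0) / (x - y0)) in *.
    assert (E: g x - g y0 = q * (x - y0)) by (unfold q; field; lra).
    rewrite E, Rabs_mult.
    assert (Rabs q < Rabs l + 1).
    { pose proof (Rabs_triang_inv q l). lra. }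
    rewrite (Rabs_right (x - y0)) in * by lra.
    apply Rle_lt_trans with ((Rabs l + 1) * (x - y0)).
    apply Rmult_le_compat_r; lra.
    apply Rlt_le_trans with ((Rabs l + 1) * (e / (Rabs l + 1))).
    apply Rmult_lt_compat_l; lra. right; field; lra.
Qed.

Lemma mvt y0 g g1 : (forall y, y0 <= y -> has_deriv_ge y0 g y (g1 y)) ->
  forall a b, y0 <= a -> a < b -> exists c, a <= c <= b /\ g b - g a = g1 c * (b - a).
Proof.
  intros H a b Ha Hab.
  destruct (MVT_gen (ext y0 g) a b g1) as [c [Hc E]].
  - intros x Hx. rewrite Rmin_left, Rmax_right in Hx by lra.
    apply is_derive_Reals. apply ext_deriv. lra. apply H; lra.
  - intros x Hx. rewrite Rmin_left, Rmax_right in Hx by lra.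
    destruct (Req_dec x y0) as [->|Hne].
    + eapply ext_cont0. apply H; lra.
    + apply derivable_continuous_pt. exists (g1 x). apply ext_deriv. lra. apply H; lra.
  - rewrite Rmin_left, Rmax_right in Hc by lra. exists c. split; auto.
    unfold ext in E. rewrite !Rmax_right in E by lra. exact E.
Qed.

Lemma min_exists (P : nat -> Prop) n : P n -> exists m, P m /\ forall k, P k -> (m <= k)%nat.
Proof.
  revert P. induction n as [n IH] using lt_wf_ind. intros P Hn.
  destruct (classic (exists k, (k < n)%nat /\ P k)) as [[k [Hk Pk]]|Hno].
  - exact (IH k Hk P Pk).
  - exists n. split; auto. intros k Pk. destruct (le_lt_dec n k); auto.
    exfalso; apply Hno; eauto.
Qed.

Lemma max_exists (P : nat -> Prop) B : P 0%nat -> (forall k, P k -> (k < B)%nat) ->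
  exists m, P m /\ forall k, P k -> (k <= m)%nat.
Proof.
  revert P. induction B as [|B IH]; intros P H0 HB.
  - specialize (HB _ H0). lia.
  - destruct (classic (P B)) as [PB|nPB].
    + exists B. split; auto. intros k Pk. specialize (HB _ Pk). lia.
    + apply IH; auto. intros k Pk. specialize (HB _ Pk).
      destruct (Nat.eq_dec k B); [subst; contradiction|lia].
Qed.

Section Sums.
Variables (p : R -> R) (y0 : R).
Hypothesis Hdec : forall a b, y0 <= a -> a < b -> p b < p a.
Hypothesis Hpos : forall a, y0 <= a -> 0 < p a.
Hypothesis Hconv : forall x y z, y0 <= x -> x <= y -> y <= z -> x < z ->
  (p y - p x) * (z - x) <= (p z - p x) * (y - x).

Lemma sl_S h n : sigma_l p y0 h (S n) = sigma_l p y0 h n + h * p (y0 + h * INR (S n)).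
Proof. reflexivity. Qed.
Lemma st_S h n : sigma_t p y0 h (S n) = sigma_t p y0 h n
           + h / 2 * (p (y0 + h * INR (S n)) + p (y0 + h * INR n)).
Proof. reflexivity. Qed.

Lemma pos_pt h n : 0 < h -> y0 <= y0 + h * INR n.
Proof. intros. pose proof (pos_INR n). nra. Qed.

Lemma sl_block h m k : 0 < h ->
  sigma_l p y0 h (m + k) - sigma_l p y0 h m >= INR k * h * p (y0 + h * INR (m + k)).
Proof.
  intros Hh. induction k as [|k IH].
  - rewrite Nat.add_0_r. simpl. lra.
  - rewrite Nat.add_succ_r, sl_S.
    assert (p (y0 + h * INR (S (m + k))) < p (y0 + h * INR (m + k))).
    { apply Hdec. apply pos_pt; auto. rewrite S_INR; lra. }
    assert (0 < p (y0 + h * INR (S (m + k)))) by (apply Hpos, pos_pt; auto).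
    pose proof (pos_INR k).
    assert (INR k * h * p (y0 + h * INR (S (m + k))) <= INR k * h * p (y0 + h * INR (m + k))).
    { apply Rmult_le_compat_l. nra. lra. }
    rewrite (S_INR k). lra.
Qed.

Lemma sl_scale eps j N : 0 < eps -> (0 < j)%nat ->
  sigma_l p y0 eps N <= sigma_l p y0 (eps / INR j) (j * N).
Proof.
  intros He Hj. assert (Hjr : 0 < INR j) by (apply lt_0_INR; auto).
  assert (Hh : 0 < eps / INR j) by (apply Rdiv_lt_0_compat; auto).
  induction N as [|N IH].
  - rewrite Nat.mul_0_r. simpl; lra.
  - rewrite Nat.mul_succ_r, sl_S. pose proof (sl_block _ (j*N) j Hh).
    replace (eps / INR j * INR (j * N + j)) with (eps * INR (S N)) in H.
    2:{ rewrite plus_INR, mult_INR, S_INR. field. lra. }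
    replace (INR j * (eps / INR j)) with eps in H by (field; lra). lra.
Qed.

Lemma st_mono h M N : 0 < h -> (M <= N)%nat -> sigma_t p y0 h M <= sigma_t p y0 h N.
Proof.
  intros Hh HMN. induction HMN. lra.
  rewrite st_S.
  assert (0 < p (y0 + h * INR (S m))) by (apply Hpos, pos_pt; auto).
  assert (0 < p (y0 + h * INR m)) by (apply Hpos, pos_pt; auto).
  assert (0 < h/2) by lra. nra.
Qed.

Lemma sl_le_st h N : 0 < h -> sigma_l p y0 h N <= sigma_t p y0 h N.
Proof.
  intros Hh. induction N. simpl; lra.
  rewrite sl_S, st_S.
  assert (p (y0 + h * INR (S N)) < p (y0 + h * INR N)).
  { apply Hdec. apply pos_pt; auto. rewrite S_INR; nra. }
  nra.
Qed.

Lemma sl_lt_st h N : 0 < h -> sigma_l p y0 h (S N) < sigma_t p y0 h (S N).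
Proof.
  intros Hh. rewrite sl_S, st_S. pose proof (sl_le_st h N Hh).
  assert (p (y0 + h * INR (S N)) < p (y0 + h * INR N)).
  { apply Hdec. apply pos_pt; auto. rewrite S_INR; nra. }
  nra.
Qed.

Lemma bound h b n M : 0 < h -> (0 < n)%nat -> b <= sigma_l p y0 h n ->
  sigma_t p y0 h M <= b -> (M < n)%nat.
Proof.
  intros Hh Hn Hb HM. destruct (le_lt_dec n M) as [Hle|]; auto.
  destruct n as [|n]; [lia|].
  pose proof (sl_lt_st h n Hh). pose proof (st_mono h _ _ Hh Hle). lra.
Qed.

Lemma st_block eps h j m k : 0 < h -> eps = h * INR j -> (k <= j)%nat ->
  eps * (sigma_t p y0 h (j * m + k) - sigma_t p y0 h (j * m)) <=
  h / 2 * (2 * INR k * eps * p (y0 + eps * INR m) + INR k * INR k * h *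
     (p (y0 + eps * INR m + eps) - p (y0 + eps * INR m))).
Proof.
  intros Hh He Hk. induction k as [|k IH].
  - rewrite Nat.add_0_r. simpl. lra.
  - rewrite Nat.add_succ_r, st_S.
    specialize (IH ltac:(lia)).
    set (a := y0 + eps * INR m).
    assert (Ha : y0 <= a) by (unfold a; assert (0 <= eps) by (subst eps; pose proof (pos_INR j); nra); pose proof (pos_INR m); nra).
    replace (y0 + h * INR (S (j * m + k))) with (a + h * (INR k + 1))
      by (unfold a; subst eps; rewrite S_INR, plus_INR, mult_INR; ring).
    replace (y0 + h * INR (j * m + k)) with (a + h * INR k)
      by (unfold a; subst eps; rewrite plus_INR, mult_INR; ring).
    fold a in IH.
    assert (Hkj : INR k + 1 <= INR j) by (rewrite <- S_INR; apply le_INR; lia).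
    pose proof (pos_INR k).
    assert (C1 : (p (a + h * (INR k + 1)) - p a) * (a + eps - a) <= (p (a + eps) - p a) * (a + h * (INR k + 1) - a)).
    { apply Hconv; auto; subst eps; nra. }
    assert (C2 : (p (a + h * INR k) - p a) * (a + eps - a) <= (p (a + eps) - p a) * (a + h * INR k - a)).
    { apply Hconv; auto; subst eps; nra. }
    replace (a + eps - a) with eps in C1, C2 by ring.
    replace (a + h * (INR k + 1) - a) with (h * (INR k + 1)) in C1 by ring.
    replace (a + h * INR k - a) with (h * INR k) in C2 by ring.
    assert (Hh2 : 0 < h / 2) by lra.
    pose proof (Rmult_le_compat_l _ _ _ (Rlt_le _ _ Hh2) C1).
    pose proof (Rmult_le_compat_l _ _ _ (Rlt_le _ _ Hh2) C2).
    rewrite S_INR. clear C1 C2. 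
    set (u := p (a + h * (INR k + 1))) in *. set (v := p (a + h * INR k)) in *.
    set (D := p (a + eps) - p a) in *.
    set (S0 := sigma_t p y0 h (j * m + k)) in *. set (S1 := sigma_t p y0 h (j * m)) in *.
    nra.
Qed.

Lemma st_scale eps j m : 0 < eps -> (0 < j)%nat ->
  sigma_t p y0 (eps / INR j) (j * m) <= sigma_t p y0 eps m.
Proof.
  intros He Hj. assert (Hjr : 0 < INR j) by (apply lt_0_INR; auto).
  set (h := eps / INR j). assert (Hh : 0 < h) by (apply Rdiv_lt_0_compat; auto).
  assert (Heps : eps = h * INR j) by (unfold h; field; lra). clearbody h.
  induction m as [|m IH].
  - rewrite Nat.mul_0_r. simpl; lra.
  - rewrite Nat.mul_succ_r, st_S. pose proof (st_block eps h j m j Hh Heps (le_n j)) as B.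
    replace (y0 + eps * INR (S m)) with (y0 + eps * INR m + eps) by (rewrite S_INR; ring).
    set (a := y0 + eps * INR m) in *. set (S0 := sigma_t p y0 h (j * m)) in *.
    set (S1 := sigma_t p y0 h (j * m + j)) in *.
    assert (eps * (S1 - S0) <= eps * (eps / 2 * (p (a + eps) + p a))).
    { eapply Rle_trans. exact B. right. assert (E: forall P Q, h/2*(2*INR j*eps*P + INR j*INR j*h*(Q-P)) = eps*(eps/2*(Q+P))) by (intros; rewrite Heps; field). apply E. }
    apply Rmult_le_reg_l in H; lra.
Qed.
End Sums.


Theorem lemma2 (y0 b eps : R) (f f1 p p1 p2 : R -> R) :
  0 < b -> 0 < eps ->
  (forall y, y0 <= y -> f y <> 0 /\ p y = 1 / f y) ->
  (forall y, y0 <= y -> has_deriv_ge y0 f y (f1 y)) ->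
  (forall y, y0 <= y -> has_deriv_ge y0 p y (p1 y)) ->
  (forall y, y0 <= y -> has_deriv_ge y0 p1 y (p2 y)) ->
  0 < f y0 ->
  (forall y, y0 <= y -> 0 < f1 y) ->
  (forall y, y0 <= y -> 0 < p2 y) ->
  Rbar_lt (Finite b) (Lim (fun x => RInt p y0 x) p_infty) ->
  (exists N : nat, (0 < N)%nat /\ b <= sigma_l p y0 (eps / INR 1) N) ->
  forall j : nat, (0 < j)%nat ->
  exists n2 n3 m3 : nat,
    is_first_l p y0 (eps / INR j) b n2 /\
    is_last_t p y0 (eps / INR j) b n3 /\
    is_last_t p y0 (eps / INR 1) b m3 /\
    (n3 < n2)%nat /\
    eps / INR j * INR n3 >= eps / INR 1 * INR m3.
Proof.
  intros Hb He Hfp Hf Hp Hp1 Hf0 Hf1 Hp2 _ [N1 [HN1 HbN1]] j Hj.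
  assert (E1 : eps / INR 1 = eps) by (simpl; field).
  rewrite E1 in *.
  assert (Hfinc : forall a c, y0 <= a -> a < c -> f a < f c).
  { intros a c Ha Hac. destruct (mvt y0 f f1 Hf a c Ha Hac) as [d [Hd E]].
    assert (0 < f1 d) by (apply Hf1; lra). nra. }
  assert (Hfpos : forall a, y0 <= a -> 0 < f a).
  { intros a Ha. destruct (Req_dec a y0) as [->|]; auto.
    pose proof (Hfinc y0 a (Rle_refl _) ltac:(lra)). lra. }
  assert (Hdec : forall a c, y0 <= a -> a < c -> p c < p a).
  { intros a c Ha Hac. rewrite (proj2 (Hfp a Ha)), (proj2 (Hfp c ltac:(lra))).
    pose proof (Hfinc a c Ha Hac). pose proof (Hfpos a Ha).
    unfold Rdiv; rewrite !Rmult_1_l. apply Rinv_lt_contravar; nra. }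
  assert (Hpos : forall a, y0 <= a -> 0 < p a).
  { intros a Ha. rewrite (proj2 (Hfp a Ha)). pose proof (Hfpos a Ha).
    unfold Rdiv; rewrite Rmult_1_l. apply Rinv_0_lt_compat; auto. }
  assert (Hp1inc : forall a c, y0 <= a -> a <= c -> p1 a <= p1 c).
  { intros a c Ha Hac. destruct (Req_dec a c) as [->|]. lra.
    destruct (mvt y0 p1 p2 Hp1 a c Ha ltac:(lra)) as [d [Hd E]].
    assert (0 < p2 d) by (apply Hp2; lra). nra. }
  assert (Hconv : forall x y z, y0 <= x -> x <= y -> y <= z -> x < z ->
    (p y - p x) * (z - x) <= (p z - p x) * (y - x)).
  { intros x y z Hx Hxy Hyz Hxz.
    destruct (Req_dec x y) as [<-|Hne1]. lra.
    destruct (Req_dec y z) as [->|Hne2]. lra.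
    destruct (mvt y0 p p1 Hp x y Hx ltac:(lra)) as [c1 [Hc1 E1']].
    destruct (mvt y0 p p1 Hp y z ltac:(lra) ltac:(lra)) as [c2 [Hc2 E2']].
    pose proof (Hp1inc c1 c2 ltac:(lra) ltac:(lra)).
    assert (p z - p x = p1 c1 * (y - x) + p1 c2 * (z - y)) by lra.
    rewrite E1', H0.
    assert (0 <= (y - x) * (z - y) * (p1 c2 - p1 c1)).
    { apply Rmult_le_pos; [apply Rmult_le_pos|]; lra. }
    nra. }
  assert (Hjr : 0 < INR j) by (apply lt_0_INR; auto).
  set (h := eps / INR j). assert (Hh : 0 < h) by (apply Rdiv_lt_0_compat; auto).
  assert (Hex : (0 < j * N1)%nat /\ b <= sigma_l p y0 h (j * N1)).
  { split. lia. pose proof (sl_scale p y0 Hdec Hpos eps j N1 He Hj). unfold h; lra. }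
  destruct (min_exists (fun n => (0 < n)%nat /\ b <= sigma_l p y0 h n) _ Hex)
    as [n2 [[Hn2 Hbn2] Hmin]].
  destruct (max_exists (fun M => sigma_t p y0 h M <= b) n2 ltac:(simpl; lra)
    (fun M HM => bound p y0 Hdec Hpos h b n2 M Hh Hn2 Hbn2 HM)) as [n3 [Hn3 Hmax3]].
  destruct (max_exists (fun M => sigma_t p y0 eps M <= b) N1 ltac:(simpl; lra)
    (fun M HM => bound p y0 Hdec Hpos eps b N1 M He HN1 HbN1 HM)) as [m3 [Hm3 Hmaxm]].
  exists n2, n3, m3. split; [|split; [|split; [|split]]].
  - refine (conj Hn2 (conj Hbn2 _)). intros M HM HbM. apply Hmin. split; auto.
  - split; auto.
  - split; auto.
  - apply (bound p y0 Hdec Hpos h b n2 n3 Hh Hn2 Hbn2 Hn3).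
  - assert (Hjm : (j * m3 <= n3)%nat).
    { apply Hmax3. pose proof (st_scale p y0 Hconv eps j m3 He Hj). unfold h; lra. }
    apply le_INR in Hjm. rewrite mult_INR in Hjm.
    replace (eps * INR m3) with (h * (INR j * INR m3)) by (unfold h; field; lra).
    apply Rle_ge. apply Rmult_le_compat_l; lra.
Qed.
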